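(* Let $m\ge 2$, $\alpha\in[0,1]$, $\pi$ a permutation of $E_{m-1}=\{1,\dots,m-1\}$ and $V_\alpha$ as defined below. Then $V_\alpha$ is ergodic: for every $\mathbf{x}\in S^{m-1}$ the limit $\lim_{n\to\infty}\frac1n\sum_{k=0}^{n-1}V_\alpha^k(\mathbf{x})$ exists.
   Context: $S^{m-1}=\{\mathbf{x}=(x_1,\dots,x_m)\in\mathbb{R}^m: x_i\ge 0,\ \sum_{i=1}^m x_i=1\}$. For $\alpha\in[0,1]$ the operator $V_\alpha\colon S^{m-1}\to S^{m-1}$ is $\mathbf{x}\mapsto\mathbf{x}'$ with $x'_k=2x_m(\alpha x_k+(1-\alpha)x_{\pi(k)})$ for $k=1,\dots,m-1$ and $x'_m=x_m^2+\big(\sum_{i=1}^{m-1}x_i\big)^2$; $V_\alpha^k$ is its $k$-fold iterate ($V_\alpha^0=\mathrm{Id}$). *)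

(* Defs.v *)
From HB Require Import structures.
From mathcomp Require Import all_boot all_order all_algebra all_fingroup.
From mathcomp Require Import all_classical all_reals all_analysis.
Set Implicit Arguments. Unset Strict Implicit. Unset Printing Implicit Defensive.
Import Order.TTheory GRing.Theory Num.Theory.
Local Open Scope ring_scope.

(* Points of R^m are row vectors x : 'rV[R]_m; the coordinate x_{i+1} of the
   paper is x 0 i for i : 'I_m (0-based indexing).  The paper's index set
   E_{m-1} = {1,...,m-1} corresponds to 'I_(m.-1) = {0,...,m-2}. *)

Definition simplex (R : realType) (m : nat) (x : 'rV[R]_m) : Prop :=
  (forall i, 0 <= x 0 i) /\ \sum_(i < m) x 0 i = 1.

Definition xlast (R : realType) (m : nat) (x : 'rV[R]_m) : R :=
  \sum_(i < m | val i == m.-1) x 0 i.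

Definition Valpha (R : realType) (m : nat) (alpha : R) (pi : {perm 'I_(m.-1)})
  (x : 'rV[R]_m) : 'rV[R]_m :=
  \row_(k < m)
    match (insub (val k) : option 'I_(m.-1)) with
    | Some j => 2 * xlast x *
                (alpha * x 0 k + (1 - alpha) * x 0 (widen_ord (leq_pred m) (pi j)))
    | None => xlast x ^+ 2 + (\sum_(i < m | (val i < m.-1)%N) x 0 i) ^+ 2
    end.

(* Main.v *)
Require Import Defs.
From HB Require Import structures.
From mathcomp Require Import all_boot all_order all_algebra all_fingroup.
From mathcomp Require Import all_classical all_reals all_analysis.
From mathcomp Require Import ring lra.
Import Order.TTheory GRing.Theory Num.Theory.
Import numFieldTopology.Exports numFieldNormedType.Exports.
Local Open Scope classical_set_scope.
Local Open Scope ring_scope.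


Section Gen.
Context {R : realType}.
Implicit Types u a b : nat -> R.

Definition Mn u n : R := n%:R^-1 * \sum_(k < n) u k.

Lemma cesaroM u (l : R) : u @ \oo --> l -> Mn u @ \oo --> l.
Proof.
move=> /cesaro H; rewrite -cvg_shiftS; apply: cvg_trans H.
apply: near_eq_cvg; near=> n => /=.
by rewrite /Mn /arithmetic_mean /= seriesEord.
Unshelve. all: by end_near. Qed.

Lemma bnd_null a b B : a @ \oo --> 0 -> (forall n, `|b n| <= B) ->
  (fun n => a n * b n) @ \oo --> 0.
Proof.
move=> Ha Hb; apply/cvgrPdist_le => e e0.
have B0 : 0 <= B by apply: le_trans (Hb 0%N).
have B1 : 0 < B + 1 by lra.
move/cvgrPdist_le: Ha => /(_ (e / (B + 1))) Ha.
have : 0 < e / (B+1) by rewrite divr_gt0.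
move=> /Ha; apply: filterS => n; rewrite !sub0r !normrN normrM => hn.
have hb : `|b n| <= B + 1 by apply: le_trans (Hb n) _; lra.
apply: le_trans (ler_pM (normr_ge0 _) (normr_ge0 _) hn hb) _.
by rewrite divfK // gt_eqF.
Qed.

Lemma invn_cvg0 : (fun n : nat => (n%:R : R)^-1) @ \oo --> 0.
Proof.
apply/(@gtr0_cvgV0 _ _ _ _ (fun n : nat => (n%:R : R))).
  by near=> n; rewrite ltr0n; near: n; exists 1%N.
exact: cvgr_idn.
Unshelve. all: by end_near. Qed.


Lemma cesaro_prod a b (c B be : R) : a @ \oo --> c -> (forall n, `|b n| <= B) ->
  Mn b @ \oo --> be -> Mn (fun n => a n * b n) @ \oo --> c * be.
Proof.
move=> Ha Hb Hm.
have E : Mn (fun n => a n * b n) =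
  (fun n => Mn (fun k => (a k - c) * b k) n + c * Mn b n).
  apply/funext => n; rewrite /Mn mulrCA -mulrDr; congr (_ * _).
  rewrite mulr_sumr -big_split /=; apply: eq_bigr => k _; ring.
rewrite E -[c * be]add0r; apply: cvgD; last exact: cvgMr.
apply: cesaroM; apply: bnd_null Hb.
by rewrite -(subrr c); apply: cvgB => //; exact: cvg_cst.
Qed.

Lemma sum_tele (h : nat -> R) n : \sum_(k < n) (h k - h k.+1) = h 0%N - h n.
Proof.
elim: n => [|n IH]; first by rewrite big_ord0 subrr.
by rewrite big_ord_recr /= IH addrA subrK.
Qed.

Lemma cesaro_tele (w h : nat -> R) (q B : R) : (forall n, w n = q + h n - h n.+1) ->
  (forall n, `|h n| <= B) -> Mn w @ \oo --> q.
Proof.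
move=> Hw Hb.
have E : forall n, (0 < n)%N -> Mn w n = q + (n%:R^-1 * (h 0%N - h n)).
  move=> n n0; rewrite /Mn; under eq_bigr => k _ do rewrite Hw -addrA.
  rewrite big_split /= sum_tele sumr_const card_ord mulrDr; congr (_ + _).
  by rewrite -[q *+ n]mulr_natr mulrCA mulVf ?mulr1 // pnatr_eq0 -lt0n.
rewrite -[q]addr0; apply: cvg_trans (_ : (fun n => q + n%:R^-1 * (h 0%N - h n)) @ \oo --> _).
  by apply: near_eq_cvg; near=> n; rewrite E //; near: n; exists 1%N.
apply: cvgD; first exact: cvg_cst.
apply: (@bnd_null _ _ (B + B)); first exact: invn_cvg0.
by move=> n; apply: le_trans (ler_normB _ _) _; apply: lerD.
Unshelve. all: by end_near. Qed.

End Gen.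

Lemma mx_cvg_entries (R : realType) m n (f : nat -> 'M[R]_(m, n)) (l : 'M[R]_(m, n)) :
  (forall i j, (fun k => f k i j) @ \oo --> l i j) -> f @ \oo --> l.
Proof.
move=> H; apply/cvg_mx_entourageP => A entA.
suff : \forall k \near \oo, forall i j, (l i j, f k i j) \in A by [].
apply: (@filter_forall nat 'I_m (fun i k => forall j, (l i j, f k i j) \in A)) => i.
apply: (@filter_forall nat 'I_n (fun j k => (l i j, f k i j) \in A)) => j.
have Hn := cvg_entourage (H i j) entA.
have Hn' : \forall k \near \oo, A (l i j, f k i j) by apply: Hn; exact: fmap_filter.
by apply: filterS Hn' => k; rewrite inE.
Qed.


Section Erg.
Variables (R : realType) (p : nat) (alpha : R) (pi : {perm 'I_p}).
Hypothesis ha : 0 <= alpha <= 1.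

Definition Lf (f : 'I_p -> R) : 'I_p -> R :=
  fun j => alpha * f j + (1 - alpha) * f (pi j).

Lemma Lf_bound (f : 'I_p -> R) (B : R) : (forall j, `|f j| <= B) ->
  forall j, `|Lf f j| <= B.
Proof.
move=> Hf j; rewrite /Lf; case/andP: ha => a0 a1.
apply: le_trans (ler_normD _ _) _; rewrite !normrM (ger0_norm a0).
rewrite (ger0_norm (_ : 0 <= 1 - alpha)); last by lra.
have := Hf j; have := Hf (pi j); nra.
Qed.

Lemma iter_bound (f : 'I_p -> R) (B : R) : (forall j, `|f j| <= B) ->
  forall n j, `|iter n Lf f j| <= B.
Proof.
move=> Hf; elim=> [|n IH] j //=; exact: Lf_bound.
Qed.

Lemma bound_sum (f : 'I_p -> R) j : `|f j| <= \sum_(i < p) `|f i|.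
Proof. by rewrite (bigD1 j) //= lerDl sumr_ge0. Qed.

Lemma ergodic (f : 'I_p -> R) j : exists q : R, Mn (fun n => iter n Lf f j) @ \oo --> q.
Proof.
case/andP: ha => a0 a1.
have [a1'|a1'] := eqVneq alpha 1.
  exists (f j).
  have E : forall n, iter n Lf f = f.
    elim=> [|n IH] //=; rewrite IH; apply/funext => i; rewrite /Lf a1'; ring.
  under eq_fun => n do rewrite E.
  apply: cesaroM; exact: cvg_cst.
have alt : 1 - alpha != 0 by rewrite subr_eq0 eq_sym.
set N := #[pi]%g.
have N0 : (N%:R : R) != 0 by rewrite pnatr_eq0 -lt0n order_gt0.
pose F i k := f ((pi ^+ k)%g i).
have Fpi : forall i k, F (pi i) k = F i k.+1.
  by move=> i k; rewrite /F expgS permM.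
have FN : forall i, F i N = F i 0%N.
  by move=> i; rewrite /F expg_order expg0.
pose Q i := N%:R^-1 * \sum_(k < N) F i k.
pose g i := (1 - alpha)^-1 * (N%:R^-1 * \sum_(k < N) \sum_(l < k) F i l).
have Qpi : forall i, Q (pi i) = Q i.
  move=> i; rewrite /Q; congr (_ * _).
  under eq_bigr => k _ do rewrite Fpi.
  have e1 : \sum_(k < N.+1) F i k = \sum_(k < N) F i k + F i N.
    by rewrite big_ord_recr.
  have e2 : \sum_(k < N.+1) F i k = F i 0%N + \sum_(k < N) F i k.+1.
    by rewrite big_ord_recl.
  by have := etrans (esym e2) e1; rewrite FN addrC => /addIr.
have LQ : Lf Q = Q by apply/funext => i; rewrite /Lf Qpi; ring.
have Hf : forall i, f i = Q i + g i - Lf g i.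
  move=> i; rewrite /Lf /g.
  have -> : forall a b c : R, a + b - (alpha * b + (1 - alpha) * c) =
     a + (1 - alpha) * (b - c) by move=> a b c; ring.
  rewrite -mulrBr mulrA mulfV // mul1r.
  rewrite -(mulrBr (N%:R^-1)) -sumrB.
  under eq_bigr => k _ do rewrite -sumrB.
  under eq_bigr => k _ do under eq_bigr => l _ do rewrite Fpi.
  under eq_bigr => k _ do rewrite (sum_tele (F i)).
  rewrite sumrB sumr_const card_ord (mulrBr (N%:R^-1)) addrC subrK.
  by rewrite -[F i 0%N *+ N]mulr_natr mulrCA mulVf // mulr1 /F expg0 perm1.
have Hn : forall n i, iter n Lf f i = Q i + iter n Lf g i - iter n.+1 Lf g i.
  elim=> [|n IH] i; first exact: Hf.
  have E : forall h k, Lf h k = alpha * h k + (1-alpha) * h (pi k) by [].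
  rewrite !iterS !E !IH Qpi !iterS !E; ring.
exists (Q j); apply: (@cesaro_tele _ _ (fun n => iter n Lf g j) _ (\sum_(i < p) `|g i|)).
  by move=> n; exact: Hn.
move=> n; apply: iter_bound; exact: bound_sum.
Qed.

End Erg.


Section Main.
Variables (R : realType) (p : nat) (alpha : R) (pi : {perm 'I_p}).
Hypothesis ha : 0 <= alpha <= 1.

Definition V := @Valpha R p.+1 alpha pi.
Definition wid (j : 'I_p) : 'I_p.+1 := widen_ord (leq_pred p.+1) j.

Lemma xlastE (x : 'rV[R]_p.+1) : xlast x = x 0 ord_max.
Proof. by rewrite /xlast (big_pred1 ord_max) // => i /=; rewrite -val_eqE. Qed.

Lemma sumfront (x : 'rV[R]_p.+1) :
  \sum_(i < p.+1 | (val i < p.+1.-1)%N) x 0 i = \sum_(j < p) x 0 (wid j).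
Proof.
rewrite big_mkcond big_ord_recr /= ltnn addr0; apply: eq_bigr => j _.
by rewrite ltn_ord; congr (x 0 _); apply: val_inj.
Qed.

Lemma sumall (x : 'rV[R]_p.+1) :
  \sum_(i < p.+1) x 0 i = \sum_(j < p) x 0 (wid j) + x 0 ord_max.
Proof.
rewrite big_ord_recr /=; congr (_ + _); apply: eq_bigr => j _.
by congr (x 0 _); apply: val_inj.
Qed.

Lemma V_wid x j : V x 0 (wid j) =
  2 * x 0 ord_max * (alpha * x 0 (wid j) + (1 - alpha) * x 0 (wid (pi j))).
Proof. by rewrite /V /Valpha mxE /= valK xlastE. Qed.

Lemma V_last x : V x 0 ord_max =
  x 0 ord_max ^+ 2 + (\sum_(j < p) x 0 (wid j)) ^+ 2.
Proof.
rewrite /V /Valpha mxE /= insubF ?ltnn // xlastE; congr (_ + _ ^+ 2).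
exact: sumfront.
Qed.


Definition L := @Lf R p alpha pi.

Fixpoint Cs (t : nat -> R) n : R :=
  if n is n'.+1 then 2 * t n' * Cs t n' else 1.

Lemma coord_cvg (x : 'rV[R]_p.+1) : simplex x ->
  forall i, cvg (Mn (fun k => iter k V x 0 i) @ \oo).
Proof.
move=> [xge0 xsum].
pose X n := iter n V x.
pose t n : R := X n 0 ord_max.
pose y n j : R := X n 0 (wid j).
pose s n := \sum_(j < p) y n j.
have t_rec : forall n, t n.+1 = t n ^+ 2 + s n ^+ 2.
  by move=> n; rewrite /t /X iterS V_last.
have y_rec : forall n j, y n.+1 j = 2 * t n * L (y n) j.
  by move=> n j; rewrite /y /X iterS V_wid.
have s_rec : forall n, s n.+1 = 2 * t n * s n.
  move=> n; rewrite /s; under eq_bigr => j _ do rewrite y_rec.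
  rewrite -mulr_sumr /L /Lf big_split /= -!mulr_sumr.
  rewrite -(reindex_inj (@perm_inj _ pi) (P := xpredT) (F := y n)) /=; ring.
have ts : forall n, t n + s n = 1.
  elim=> [|n IH]; first by rewrite /t /s /y /X /= addrC -sumall.
  rewrite t_rec s_rec.
  have -> : t n ^+ 2 + s n ^+ 2 + 2 * t n * s n = (t n + s n) ^+ 2 by ring.
  by rewrite IH expr1n.
have s0ge : 0 <= s 0 by apply: sumr_ge0 => j _; exact: xge0.
have t0ge : 0 <= t 0 by exact: xge0.
have tb : forall n, (0 < n)%N -> 1/2 <= t n <= 1.
  case=> // n _; elim: n => [|n IH].
    rewrite t_rec; have := ts 0%N => h.
    have h1 := sqr_ge0 (t 0%N - s 0%N); have h2 := mulr_ge0 t0ge s0ge.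
    apply/andP; split; nra.
  rewrite t_rec; have := ts n.+1 => h; case/andP: IH => h1 h2.
  have h3 := sqr_ge0 (t n.+1 - s n.+1).
  have h4 : 0 <= t n.+1 * s n.+1 by apply: mulr_ge0; lra.
  apply/andP; split; nra.
have tcvg : cvgn t.
  apply/cvg_ex.
  have : cvgn (fun n => t n.+1).
    apply: nonincreasing_is_cvgn.
      apply/nonincreasing_seqP => n; rewrite t_rec; have := tb n.+1 isT.
      have := ts n.+1; nra.
    by exists (1/2) => _ [n _ <-]; have /andP[] := tb n.+1 isT.
  move/cvg_ex => [l Hl]; exists l; rewrite -cvg_shiftS; exact: Hl.
have y_C : forall n, y n = (fun j => Cs t n * iter n L (y 0%N) j).
  elim=> [|n IH]; first by apply/funext => j /=; rewrite mul1r.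
  apply/funext => j; rewrite y_rec IH /= /L /Lf; ring.
have s_C : forall n, s n = Cs t n * s 0%N.
  elim=> [|n IH]; first by rewrite /= mul1r.
  by rewrite s_rec IH /= mulrA.
move=> i; have [ip|ip] := ltnP i p; last first.
  have -> : i = ord_max by apply/val_inj/eqP; rewrite /= eqn_leq ip andbT -ltnS ltn_ord.
  apply/cvg_ex; exists (lim (t @ \oo)); apply: cesaroM; exact: tcvg.
have -> : i = wid (Ordinal ip) by apply: val_inj.
set j := Ordinal ip.
have -> : (fun k => iter k V x 0 (wid j)) = (fun k => Cs t k * iter k L (y 0%N) j).
  by apply/funext => k; rewrite -/(y k j) y_C.
have [s00|s0n] := eqVneq (s 0%N) 0.
  have y00 : forall j, y 0%N j = 0.
    by move=> j'; apply: (psumr_eq0P _ s00) => // k _; exact: xge0.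
  have -> : (fun k => Cs t k * iter k L (y 0%N) j) = (fun=> 0).
    apply/funext => k; apply/eqP; rewrite mulf_eq0; apply/orP; right; rewrite -normr_le0.
    by apply: iter_bound => // j'; rewrite y00 normr0.
  apply/cvg_ex; exists 0; apply: cesaroM; exact: cvg_cst.
have [q Hq] := @ergodic R p alpha pi ha (y 0%N) j.
apply/cvg_ex; exists ((1 - lim (t @ \oo)) / s 0%N * q).
apply: (@cesaro_prod R _ _ _ (\sum_(i < p) `|y 0%N i|) _ _ _ Hq); last first.
  by move=> n; apply: iter_bound => // j0; exact: bound_sum.
have -> : Cs t = (fun n => (1 - t n) * (s 0%N)^-1).
  apply/funext => n; rewrite -(ts n) addrC addKr s_C mulfK //.
apply: cvgM; last exact: cvg_cst.
apply: cvgB; [exact: cvg_cst | exact: tcvg].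
Qed.

End Main.

Theorem corollary2 (R : realType) (m : nat) (alpha : R)
  (pi : {perm 'I_(m.-1)}) :
  (2 <= m)%N -> 0 <= alpha <= 1 ->
  forall x : 'rV[R]_m, simplex x ->
  exists l : 'rV[R]_m,
    (fun n : nat => (n%:R)^-1 *: \sum_(k < n) iter k (Valpha alpha pi) x)
      @ \oo --> l.
Proof.
move=> hm ha; case: m pi hm => [|p] // pi _ x hx.
have H := @coord_cvg R p alpha pi ha x hx.
exists (\row_i lim (Mn (fun k => iter k (Valpha alpha pi) x 0 i) @ \oo)).
apply: mx_cvg_entries => i0 i; rewrite ord1 mxE.
have -> : (fun k => ((k%:R)^-1 *: \sum_(l < k) iter l (Valpha alpha pi) x) 0 i)
   = Mn (fun k => iter k (Valpha alpha pi) x 0 i).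
  by apply/funext => k; rewrite /Mn mxE summxE.
exact: (H i).
Qed.
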